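(* Let $q$ be odd, $\alpha,\beta\in\mathbb{F}_{q^2}$ with $\alpha\ne0$ and $(\beta^q-\beta)^2+4\alpha^{q+1}$ a nonsquare in $\mathbb{F}_q$, let $w=\epsilon^2$ and $R_2=(0,w\epsilon,1)$. Then (1) $\mathrm{pedal}(R_2)$ consists exactly of the points $Q'_x=(x,\,2\alpha x^2+(\beta-\beta^q)x^{q+1}+w\epsilon,\,1)$ with $x\in\mathbb{F}_{q^2}$ satisfying $\alpha x^2-\alpha^q x^{2q}+(\beta-\beta^q)x^{q+1}+2w\epsilon=0$; (2) the points of $\mathrm{pedal}(R_2)$ lie on the lines of the Baer pencil joining the vertex $U_\infty=(1,0,0)$ to the Baer subline $\{E_{s-w\epsilon}=(0,s-w\epsilon,1): s\in\mathbb{F}_q\}\cup\{(0,1,0)\}$.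
   Context: Points of $\mathrm{PG}(2,q^2)$ have homogeneous coordinates $(x,y,z)$. $\zeta$ is a primitive element of $\mathbb{F}_{q^2}$ and $\epsilon=\zeta^{(q+1)/2}$ (so $\epsilon^q=-\epsilon$ and $w=\epsilon^2$ is a primitive element of $\mathbb{F}_q$). $\mathcal U_{\alpha\beta}=\{(x,\alpha x^2+\beta x^{q+1}+r,1): x\in\mathbb{F}_{q^2}, r\in\mathbb{F}_q\}\cup\{(0,1,0)\}$, which under the hypotheses is a unital (a set of $q^3+1$ points meeting every line in $1$ or $q+1$ points). For a point $P$ not on the unital, $\mathrm{pedal}(P)$ is the set of points of contact of the $q+1$ tangent lines (lines meeting the unital in exactly one point) through $P$. A Baer pencil is the set of $q+1$ lines joining a vertex point to the $q+1$ points of a Baer subline (a set of points of a line projectively equivalent to $\mathrm{PG}(1,q)$). *)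

(* Defs.v *)
From HB Require Import structures.
From mathcomp Require Import all_boot all_order all_algebra all_field.
Set Implicit Arguments. Unset Strict Implicit. Unset Printing Implicit Defensive.
Import GRing.Theory.
Local Open Scope ring_scope.

(* Homogeneous coordinates (x, y, z) of PG(2, F), F = F_{q^2}.
   A projective point is represented by any nonzero triple; two triples
   represent the same point iff they are proportional. A line is likewise
   represented by a nonzero triple (a, b, c): the line a X + b Y + c Z = 0. *)
Definition hcoord (F : fieldType) := (F * F * F)%type.

Definition hzero (F : fieldType) : hcoord F := (0, 0, 0).

Definition hscale (F : fieldType) (k : F) (P : hcoord F) : hcoord F :=
  (k * P.1.1, k * P.1.2, k * P.2).

Definition proj_eq (F : fieldType) (P Q : hcoord F) : Prop :=
  exists k : F, k != 0 /\ P = hscale k Q.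

Definition incid (F : fieldType) (L P : hcoord F) : Prop :=
  L.1.1 * P.1.1 + L.1.2 * P.1.2 + L.2 * P.2 = 0.

Definition inFq (F : fieldType) (q : nat) (r : F) : Prop := r ^+ q = r.

Definition nonsquare_Fq (F : fieldType) (q : nat) (d : F) : Prop :=
  ~ (exists y : F, inFq q y /\ y ^+ 2 = d).

Definition inU (F : fieldType) (q : nat) (alpha beta : F) (P : hcoord F) : Prop :=
  (exists x r : F, inFq q r /\
     proj_eq P (x, alpha * x ^+ 2 + beta * x ^+ q.+1 + r, 1))
  \/ proj_eq P (0, 1, 0).

Definition tangent (F : fieldType) (q : nat) (alpha beta : F) (L : hcoord F) : Prop :=
  L != hzero F /\
  exists P, [/\ P != hzero F, inU q alpha beta P, incid L P &
    forall Q, Q != hzero F -> inU q alpha beta Q -> incid L Q -> proj_eq Q P].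

Definition pedal (F : fieldType) (q : nat) (alpha beta : F) (P T : hcoord F) : Prop :=
  inU q alpha beta T /\
  exists L, [/\ tangent q alpha beta L, incid L P & incid L T].

(* Main.v *)
Require Import Defs.
From HB Require Import structures.
From mathcomp Require Import all_boot all_order all_algebra all_field.
From mathcomp Require Import fingroup abelian pgroup.
From mathcomp Require Import ring.
Import GRing.Theory.
Local Open Scope ring_scope.

Lemma qpow (F : finFieldType) (q : nat) : #|F| = (q ^ 2)%N -> [pchar F].-nat q.
Proof.
move=> hF.
have h1 : (1 < #|F|)%N by apply: finNzRing_gt1.
have pp : prime (pdiv #|F|) by apply: pdiv_prime.
have := abelem_pgroup (finField_is_abelem F).
rewrite /pgroup cardsT => hn.
have pc : pdiv #|F| \in [pchar F].
  by case: (p_natP hn) => k hk; apply: (card_finPcharP hk).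
rewrite (eq_pnat _ (pcharf_eq pc)).
by apply: pnat_dvd hn; rewrite hF expnS expn1; apply: dvdn_mulr.
Qed.

Section S.
Variables (F : finFieldType) (q : nat).
Hypothesis hF : #|F| = (q ^ 2)%N.

Definition cj (x : F) := x ^+ q.
Lemma cjE x : x ^+ q = cj x. Proof. by []. Qed.
Lemma cjD x y : cj (x + y) = cj x + cj y.
Proof. by rewrite /cj exprDn_pchar // qpow. Qed.
Lemma cj0 : cj 0 = 0.
Proof. by apply: (@addrI _ (cj 0)); rewrite -cjD !addr0. Qed.
Lemma cjN x : cj (- x) = - cj x.
Proof. by apply: (@addrI _ (cj x)); rewrite -cjD !subrr cj0. Qed.
Lemma cjB x y : cj (x - y) = cj x - cj y.
Proof. by rewrite cjD cjN. Qed.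
Lemma cjM x y : cj (x * y) = cj x * cj y.
Proof. by rewrite /cj exprMn. Qed.
Lemma cj1 : cj 1 = 1.
Proof. by rewrite /cj expr1n. Qed.
Lemma cjX x n : cj (x ^+ n) = cj x ^+ n.
Proof. by rewrite /cj exprAC. Qed.
Lemma cjK x : cj (cj x) = x.
Proof. by rewrite /cj -exprM mulnn -hF expf_card. Qed.
Lemma cjV x : cj (x ^-1) = (cj x) ^-1.
Proof. by rewrite /cj exprVn. Qed.
Lemma cj_nat n : cj n%:R = n%:R.
Proof. elim: n => [|n IH]; first by rewrite cj0. by rewrite mulrS cjD cj1 IH -mulrS. Qed.
Lemma cj_eq0 x : (cj x == 0) = (x == 0).
Proof.
apply/idP/idP => /eqP h; apply/eqP; last by rewrite h cj0.
by rewrite -[x]cjK h cj0.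
Qed.

Variables (a b : F).
Hypothesis hns : nonsquare_Fq q ((b ^+ q - b) ^+ 2 + 4 * a ^+ q.+1).

Lemma aniso h : h != 0 ->
  a * h ^+ 2 - cj a * cj h ^+ 2 + (b - cj b) * (h * cj h) != 0.
Proof.
move=> hn; apply/eqP => E.
have Hn : cj h != 0 by rewrite cj_eq0.
apply: hns.
exists (a * h / cj h + cj a * cj h / h); split.
  rewrite /inFq cjE cjD !cjM !cjV !cjK. ring.
rewrite [a ^+ q.+1]exprS cjE.
have -> : (a * h / cj h + cj a * cj h / h) ^+ 2 = 
   (cj b - b) ^+ 2 + 4 * (a * cj a) + 
   (a * h ^+ 2 - cj a * cj h ^+ 2 + (b - cj b) * (h * cj h)) *
   (a * h / cj h - cj a * cj h / h - (b - cj b)) / (h * cj h).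
  by field; apply/andP.
by rewrite E mul0r mul0r addr0.
Qed.


Definition f (m c x : F) := m * x + c - a * x ^+ 2 - b * (x * cj x).

Lemma Gshift m c x0 h A : cj c = - c ->
  A = 2 * a * x0 + (b - cj b) * cj x0 - m ->
  f m c (x0 + h) - cj (f m c (x0 + h)) =
  f m c x0 - cj (f m c x0) -
  (a * h ^+ 2 - cj a * cj h ^+ 2 + (b - cj b) * (h * cj h)) -
  (A * h - cj A * cj h).
Proof.
move=> hc ->; rewrite /f.
rewrite !(cjD, cjN, cjM, cjX, cjK, cj_nat, hc); ring.
Qed.

Lemma eq_from (x y e k : F) : e = 0 -> x - y = k * e -> x = y.
Proof. by move=> he; rewrite he mulr0 => /eqP; rewrite subr_eq0 => /eqP. Qed.

Lemma e_q1 x : x ^+ q.+1 = x * cj x. Proof. by rewrite exprS. Qed.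
Lemma e_2q x : x ^+ (2 * q) = cj x ^+ 2. Proof. by rewrite mulnC exprM. Qed.

Lemma nz3 x y : (x, y, 1) != hzero F.
Proof. by apply/eqP => /(congr1 (fun t => t.2)) /= /eqP; rewrite oner_eq0. Qed.
Lemma nz010 : (0, 1, 0) != hzero F.
Proof. by apply/eqP => /(congr1 (fun t => t.1.2)) /= /eqP; rewrite oner_eq0. Qed.

Lemma inU_pt x y r : cj r = r -> y = a * x ^+ 2 + b * (x * cj x) + r ->
  inU q a b (x, y, 1).
Proof.
move=> hr ->; left; exists x, r; split => //.
by exists 1; split; [exact: oner_neq0 | rewrite /hscale /= !mul1r e_q1].
Qed.

Lemma eq_from2 (x y l r k : F) : l = r -> x - y = k * (l - r) -> x = y.
Proof. by move=> he; apply: eq_from; rewrite he subrr. Qed.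

Lemma pe_x (Q T P : hcoord F) x y x0 y0 k : proj_eq Q P -> proj_eq T P ->
  Q = (x, y, 1) -> T = hscale k (x0, y0, 1) -> k != 0 -> x = x0 /\ y = y0.
Proof.
case: P => [[p1 p2] p3] [k1 [k1n ->]] [k2 [k2n ->]].
rewrite /hscale /= => -[e1 e2 e3] [f1 f2 f3] kn.
have ek : k = k2 * p3 by rewrite f3 mulr1.
split; apply: (mulfI kn).
  rewrite -e1 -f1 ek; apply: (eq_from2 _ _ _ _ (k2 * p1) e3); ring.
rewrite -e2 -f2 ek; apply: (eq_from2 _ _ _ _ (k2 * p2) e3); ring.
Qed.

Variables (w eps : F).
Hypotheses (heps : cj eps = - eps) (eps0 : eps != 0) (hw : cj w = w) (w0 : w != 0)
  (two0 : (2 : F) != 0).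

Lemma hc : cj (w * eps) = - (w * eps).
Proof. by rewrite cjM hw heps mulrN. Qed.
Lemma c0 : w * eps != 0.
Proof. by rewrite mulf_neq0. Qed.

Lemma fwd T : pedal q a b (0, w * eps, 1) T ->
  exists x0, a * x0 ^+ 2 - cj a * cj x0 ^+ 2 + (b - cj b) * (x0 * cj x0) + 2 * w * eps = 0 /\
   proj_eq T (x0, 2 * a * x0 ^+ 2 + (b - cj b) * (x0 * cj x0) + w * eps, 1).
Proof.
move=> [hU [L [htan hR hT]]].
case: L htan hR hT => [[l1 l2] l3] [hL0 [P [hP0 hPU hPL huniq]]]; rewrite /incid /= => hR hT.
have l3e : l3 = - (l2 * (w * eps)).
  by apply: (eq_from _ _ _ 1 hR); ring.
have [l20 | l2n0] := eqVneq l2 0.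
  exfalso.
  have hQ1 := huniq (0, 0, 1) (nz3 _ _) (inU_pt 0 _ 0 cj0 _) _.
  have hQ2 := huniq (0, 1, 0) nz010 (or_intror (ex_intro _ 1 (conj (oner_neq0 _) _))) _.
  case: P {hP0 hPU hPL huniq} hQ1 hQ2 => [[p1 p2] p3].
  move=> h1 h2.
  have i1 : incid (l1, l2, l3) (0, 0, 1) by rewrite /incid /= l3e l20; ring.
  have i2 : incid (l1, l2, l3) (0, 1, 0) by rewrite /incid /= l3e l20; ring.
  have [k1 [k1n /(congr1 (fun t => t.1.2)) /= e1]] := h1 ltac:(ring) i1.
  have [k2 [k2n /(congr1 (fun t => t.1.2)) /= e2]] := h2 ltac:(by rewrite /hscale /= !mul1r) i2.
  move/eqP: e1; rewrite eq_sym mulf_eq0 (negbTE k1n) /= => /eqP p20.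
  by move/eqP: e2; rewrite p20 mulr0 oner_eq0.
have hTP := huniq.
have Tn0 : forall k x y, k != 0 -> hscale k (x, y, 1) != hzero F.
  move=> k x y kn; apply/eqP => /(congr1 (fun t => t.2)) /= /eqP.
  by rewrite mulr1 (negbTE kn).
case: (hU) => [[x0 [r0 [hr0 [k [kn hTe]]]]] | [k [kn hTe]]]; last first.
  exfalso; move: hT; rewrite hTe /hscale /= l3e => /eqP; apply/negP.
  rewrite (_ : _ + _ = l2 * k); last by ring.
  by rewrite mulf_neq0.
rewrite /inFq cjE in hr0; rewrite e_q1 in hTe.
have hT' : incid (l1, l2, l3) (x0, a * x0 ^+ 2 + b * (x0 * cj x0) + r0, 1).
  rewrite /incid /=; apply: (mulfI kn); rewrite mulr0 -hT hTe /hscale /=; ring.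
have [m hm] : exists m, m = - l1 / l2 by eexists.
have hinc : forall x y, incid (l1, l2, l3) (x, y, 1) <-> y = m * x + w * eps.
  move=> x y; rewrite /incid /=; split => h.
    by apply: (eq_from _ _ _ (l2^-1) h); rewrite hm l3e; field.
  by rewrite h hm l3e; field.
have y0e := (hinc _ _).1 hT'.
have hTTP : proj_eq T P by apply: hTP => //; rewrite hTe; exact: Tn0.
have uniq : forall x r, cj r = r -> a * x ^+ 2 + b * (x * cj x) + r = m * x + w * eps -> x = x0.
  move=> x r hr hy.
  have hQ := hTP (x, _, 1) (nz3 _ _) (inU_pt x _ r hr erefl) ((hinc _ _).2 hy).
  by case: (pe_x _ _ _ _ _ _ _ _ hQ hTTP erefl hTe kn).
have fx0 : cj (f m (w * eps) x0) = f m (w * eps) x0.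
  have -> : f m (w * eps) x0 = r0 by rewrite /f -y0e; ring.
  exact: hr0.
have [A hA] : exists A, A = 2 * a * x0 + (b - cj b) * cj x0 - m by eexists.
have A0 : A = 0.
  have [//|An0] := eqVneq A 0; exfalso.
  have [v hv] : exists v, v = w * eps / A by eexists.
  have vn : v != 0.
    by rewrite hv mulf_neq0 ?invr_neq0 ?mulf_neq0.
  have Qn := aniso _ vn.
  have [Qv hQv] : exists Qv, Qv = a * v ^+ 2 - cj a * cj v ^+ 2 + (b - cj b) * (v * cj v) by eexists.
  rewrite -hQv in Qn.
  have [t ht] : exists t, t = - (2 * (w * eps)) / Qv by eexists.
  have tn : t != 0 by rewrite ht mulf_neq0 ?invr_neq0 // oppr_eq0 !mulf_neq0.
  have cjQv : cj Qv = - Qv by rewrite hQv !(cjD, cjN, cjM, cjX, cjK); ring.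
  have cjt : cj t = t.
    by rewrite ht cjM cjN cjM cjV cj_nat hc cjQv; field; rewrite oppr_eq0 Qn.
  have Av : A * v = w * eps by rewrite hv; field.
  have cAv : cj A * cj v = - (w * eps) by rewrite -cjM Av hc.
  have tQ : t * Qv = - (2 * (w * eps)) by rewrite ht; field.
  have := uniq (x0 + t * v) (f m (w * eps) (x0 + t * v)).
  have hfx : cj (f m (w * eps) (x0 + t * v)) = f m (w * eps) (x0 + t * v).
    apply/eqP; rewrite eq_sym -subr_eq0; apply/eqP.
    rewrite (Gshift _ _ _ _ A hc hA) fx0 subrr cjM cjt.
    have -> : 0 - (a * (t * v) ^+ 2 - cj a * (t * cj v) ^+ 2 + (b - cj b) * (t * v * (t * cj v))) -
       (A * (t * v) - cj A * (t * cj v)) = - (t * (t * Qv)) - t * (A * v) + t * (cj A * cj v).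
      by rewrite hQv; ring.
    by rewrite tQ Av cAv; ring.
  move=> /(_ hfx) /(_ ltac:(rewrite /f; ring)) e.
  have : t * v = 0 by rewrite -[t * v](addKr x0) e addNr.
  by apply/eqP; rewrite mulf_neq0.
have hm' : m = 2 * a * x0 + (b - cj b) * cj x0.
  by apply: (eq_from _ _ _ (-1) A0); rewrite hA; ring.
exists x0; split.
  move: fx0; rewrite /f hm' !(cjD, cjN, cjM, cjX, cjK, cj_nat, hw, heps) => e.
  by apply: (eq_from2 _ _ _ _ (-1) e); ring.
exists k; split => //; rewrite hTe y0e hm'; congr (hscale k (_, _, _)); ring.
Qed.

Lemma bwd T x0 :
  a * x0 ^+ 2 - cj a * cj x0 ^+ 2 + (b - cj b) * (x0 * cj x0) + 2 * w * eps = 0 ->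
  proj_eq T (x0, 2 * a * x0 ^+ 2 + (b - cj b) * (x0 * cj x0) + w * eps, 1) ->
  pedal q a b (0, w * eps, 1) T.
Proof.
move=> hE [k [kn hTe]].
have [m hm] : exists m, m = 2 * a * x0 + (b - cj b) * cj x0 by eexists.
have [r0 hr0] : exists r0, r0 = a * x0 ^+ 2 - cj b * (x0 * cj x0) + w * eps by eexists.
have cr0 : cj r0 = r0.
  rewrite hr0 !(cjD, cjN, cjM, cjX, cjK, cj_nat, hw, heps).
  by apply: (eq_from _ _ _ (-1) hE); ring.
have Ye : 2 * a * x0 ^+ 2 + (b - cj b) * (x0 * cj x0) + w * eps =
   a * x0 ^+ 2 + b * (x0 * cj x0) + r0 by rewrite hr0; ring.
have hPU := inU_pt x0 _ r0 cr0 Ye.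
split.
  left; exists x0, r0; split => //; exists k; split => //.
  by rewrite hTe e_q1 -Ye.
exists (- m, 1, - (w * eps)); split.
- split; first by apply/eqP => /(congr1 (fun t => t.1.2)) /= /eqP; rewrite oner_eq0.
  exists (x0, 2 * a * x0 ^+ 2 + (b - cj b) * (x0 * cj x0) + w * eps, 1); split.
  + exact: nz3.
  + exact: hPU.
  + by rewrite /incid /= hm; ring.
  move=> Q Qn QU QL.
  case: QU => [[x [r [hr [k' [k'n hQe]]]]] | [k' [k'n hQe]]]; last first.
    exfalso; move: QL; rewrite hQe /incid /= => /eqP; apply/negP.
    rewrite (_ : _ + _ = k'); last by ring.
    exact: k'n.
  rewrite /inFq cjE in hr; rewrite e_q1 in hQe.
  have hy : a * x ^+ 2 + b * (x * cj x) + r = m * x + w * eps.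
    move: QL; rewrite hQe /incid /= => QL.
    by apply: (eq_from _ _ _ (k'^-1) QL); field.
  have hfx : cj (f m (w * eps) x) = f m (w * eps) x.
    have -> : f m (w * eps) x = r by rewrite /f -hy; ring.
    exact: hr.
  have hfx0 : f m (w * eps) x0 - cj (f m (w * eps) x0) = 0.
    rewrite /f hm !(cjD, cjN, cjM, cjX, cjK, cj_nat, hw, heps).
    by apply: (eq_from _ _ _ 1 hE); ring.
  have hA0 : (0 : F) = 2 * a * x0 + (b - cj b) * cj x0 - m by rewrite hm; ring.
  have := Gshift m (w * eps) x0 (x - x0) 0 hc hA0.
  rewrite (_ : x0 + (x - x0) = x); last by ring.
  rewrite hfx subrr hfx0 cj0 => hQ. idtac.
  have Qh : a * (x - x0) ^+ 2 - cj a * cj (x - x0) ^+ 2 + (b - cj b) * ((x - x0) * cj (x - x0)) = 0.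
    by apply: (eq_from _ _ _ (-1) (esym hQ)); ring.
  have [h0|hn] := eqVneq (x - x0) 0; last by have := aniso _ hn; rewrite Qh eqxx.
  have xe : x = x0 by apply/eqP; rewrite -subr_eq0 h0.
  exists k'; split => //; rewrite hQe xe; congr (hscale k' (_, _, _)).
  by rewrite -xe hy hm xe; ring.
- by rewrite /incid /=; ring.
by rewrite hTe /incid /hscale /= hm; ring.
Qed.

Lemma mainS :
  (forall T : hcoord F,
     pedal q a b (0, w * eps, 1) T <->
     exists x : F,
       a * x ^+ 2 - a ^+ q * x ^+ (2 * q) + (b - b ^+ q) * x ^+ q.+1
         + 2 * w * eps = 0 /\
       proj_eq T (x, 2 * a * x ^+ 2 + (b - b ^+ q) * x ^+ q.+1 + w * eps, 1))
  /\
  (forall T : hcoord F, pedal q a b (0, w * eps, 1) T ->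
     exists B : hcoord F,
       ((exists s : F, inFq q s /\ B = (0, s - w * eps, 1)) \/ B = (0, 1, 0)) /\
       exists L : hcoord F, [/\ L != hzero F, incid L (1, 0, 0), incid L B & incid L T]).
Proof.
split.
  move=> T; split.
    by move/fwd => [x [E P]]; exists x; rewrite e_2q !e_q1; split.
  by move=> [x]; rewrite e_2q !e_q1 => -[E P]; apply: (bwd _ x).
move=> T /fwd [x [E [k [kn hTe]]]].
pose Y := 2 * a * x ^+ 2 + (b - cj b) * (x * cj x) + w * eps.
exists (0, (Y + w * eps) - w * eps, 1); split.
  left; exists (Y + w * eps); split => //.
  rewrite /inFq cjE /Y !(cjD, cjN, cjM, cjX, cjK, cj_nat, hw, heps).
  by apply: (eq_from _ _ _ (-2) E); ring.
exists (0, 1, - Y); split.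
- by apply/eqP => /(congr1 (fun t => t.1.2)) /= /eqP; rewrite oner_eq0.
- by rewrite /incid /=; ring.
- by rewrite /incid /=; ring.
by rewrite hTe /incid /hscale /Y /=; ring.
Qed.
End S.
From mathcomp Require Import zify.

Theorem lemma2p6 (F : finFieldType) (q : nat) (alpha beta zeta : F) :
  #|F| = (q ^ 2)%N -> odd q ->
  alpha != 0 ->
  nonsquare_Fq q ((beta ^+ q - beta) ^+ 2 + 4 * alpha ^+ q.+1) ->
  (q ^ 2 - 1)%N.-primitive_root zeta ->
  let eps := zeta ^+ (q.+1)./2 in
  let w := eps ^+ 2 in
  let R2 : hcoord F := (0, w * eps, 1) in
  (forall T : hcoord F,
     pedal q alpha beta R2 T <->
     exists x : F,
       alpha * x ^+ 2 - alpha ^+ q * x ^+ (2 * q) + (beta - beta ^+ q) * x ^+ q.+1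
         + 2 * w * eps = 0 /\
       proj_eq T (x, 2 * alpha * x ^+ 2 + (beta - beta ^+ q) * x ^+ q.+1 + w * eps, 1))
  /\
  (forall T : hcoord F, pedal q alpha beta R2 T ->
     exists B : hcoord F,
       ((exists s : F, inFq q s /\ B = (0, s - w * eps, 1)) \/ B = (0, 1, 0)) /\
       exists L : hcoord F, [/\ L != hzero F, incid L (1, 0, 0), incid L B & incid L T]).
Proof.
move=> hF oq ha hns hz eps w R2.
have h1 : (1 < q ^ 2)%N by rewrite -hF; apply: finNzRing_gt1.
have qE : q = (q./2).*2.+1 by rewrite -[q in LHS](odd_double_half q) oq.
set k := q./2 in qE.
have k1 : (1 <= k)%N.
  move: h1; rewrite qE; case: (k) => //.
have hq1 : (q.+1)./2 = k.+1.
  by rewrite qE -doubleS doubleK.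
have nE : (q ^ 2 - 1 = 4 * (k * k.+1))%N by rewrite qE; lia.
rewrite nE in hz.
have ze1 : zeta ^+ (4 * (k * k.+1)) = 1 by apply: prim_expr_order.
have zn0 : zeta != 0.
  apply/eqP => z0; move: ze1; rewrite z0 expr0n.
  have -> : (4 * (k * k.+1) == 0)%N = false by lia.
  by move/eqP; rewrite eq_sym oner_eq0.
pose u := zeta ^+ (2 * (k * k.+1)).
have u2 : u ^+ 2 = 1 by rewrite /u -exprM mulnC mulnA.
have un1 : u != 1.
  rewrite /u -(prim_order_dvd hz).
  apply/negP => /dvdn_leq; lia.
have um1 : u = -1.
  by move/eqP: u2; rewrite sqrf_eq1 (negbTE un1) /= => /eqP.
have heps : cj F q eps = - eps.
  rewrite /cj /eps hq1 -exprM (_ : (k.+1 * q = k.+1 + 2 * (k * k.+1))%N); last by rewrite qE; lia.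
  by rewrite exprD -/u um1 mulrN1.
have eps0 : eps != 0 by rewrite expf_neq0.
have hw : cj F q w = w by rewrite /w (cjX F q) heps sqrrN.
have w0 : w != 0 by rewrite expf_neq0.
have two0 : (2 : F) != 0.
  apply/eqP => t0; move: un1; rewrite um1 => /eqP; apply.
  by apply: (eq_from F _ _ _ (-1) t0); ring.
exact: (mainS F q hF alpha beta hns w eps heps eps0 hw w0 two0).
Qed.
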